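(* For every $n\ge1$, let $L_{2n}$ be the ladder graph with vertices ordered $v_1\prec v_2\prec\cdots\prec v_n\prec u_n\prec u_{n-1}\prec\cdots\prec u_1$. Then the ordered Ramsey number satisfies $R_o(L_{2n},L_{2n})\le 32n^3$.
   Context: The ladder graph $L_{2n}$ consists of two paths $u_1u_2\cdots u_n$ and $v_1v_2\cdots v_n$ together with the edges $u_iv_i$, $i\in[n]$. An ordered graph is a graph with a total order $\prec$ on its vertices. An ordered graph $F$ is contained in an ordered graph $H$ if there is an injective map $V(F)\to V(H)$ preserving both the vertex order and adjacency (edges map to edges). The ordered Ramsey number $R_o(F,G)$ is the smallest $N$ such that every red/blue colouring of the edges of the ordered complete graph $K_N$ contains a blue copy of $F$ or a red copy of $G$. *)

(* Defs.v *)
From mathcomp Require Import all_boot.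
Unset Printing Implicit Defensive.

(* An ordered graph on k vertices: vertex set 'I_k with the natural order of
   'I_k, and a symmetric irreflexive adjacency relation [adj]. *)

(* Ordered ladder L_{2n} with order v_1 < ... < v_n < u_n < ... < u_1.
   Position p (0-based) is v_{p+1} if p < n, and u_{2n-p} if p >= n.
   Edges: v_i v_{i+1}, u_i u_{i+1}, u_i v_i. *)
Definition ladder_adj (n : nat) (p q : 'I_(2 * n)) : bool :=
  [|| (p.+1 == q) && (q < n),
      (q.+1 == p) && (p < n),
      (p.+1 == q) && (n <= p),
      (q.+1 == p) && (n <= q)
    | (p + q == (2 * n).-1) ].          (* rung u_i v_i *)

(* A red/blue colouring of the ordered complete graph K_N on 'I_N:
   colour c x y for x < y, true = red, false = blue. *)

Definition has_mono_copy (k : nat) (adj : rel 'I_k) (N : nat)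
  (c : 'I_N -> 'I_N -> bool) (col : bool) : Prop :=
  exists f : 'I_k -> 'I_N,
    (forall x y : 'I_k, x < y -> f x < f y) /\
    (forall x y : 'I_k, x < y -> adj x y -> c (f x) (f y) = col).

Definition ordered_ramsey_prop (kF : nat) (F : rel 'I_kF) (kG : nat) (G : rel 'I_kG)
  (N : nat) : Prop :=
  forall c : 'I_N -> 'I_N -> bool,
    @has_mono_copy kF F N c false \/ @has_mono_copy kG G N c true.

Definition ordered_ramsey_le (kF : nat) (F : rel 'I_kF) (kG : nat) (G : rel 'I_kG)
  (M : nat) : Prop :=
  exists2 N, N <= M & @ordered_ramsey_prop kF F kG G N.

(* Main.v *)
Require Import Defs.
From mathcomp Require Import all_boot zify.

Definition relk (c : nat -> nat -> bool) (k : bool) (x y : nat) : bool :=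
  (x < y) && (c x y == k).

Definition Ladder (n N : nat) (c : nat -> nat -> bool) : Prop :=
  exists (k : bool) (s : seq nat), size s = 2 * n /\ sorted ltn s /\
    all (fun x => x < N) s /\
    (forall p q, p < q -> q < 2 * n -> (q == p.+1) || (p + q == (2 * n).-1) ->
       c (nth 0 s p) (nth 0 s q) = k).

Lemma clique_ladder n N c k s :
  pairwise (relk c k) s -> 2 * n <= size s -> all (fun x => x < N) s ->
  Ladder n N c.
Proof.
move=> pw hs hN.
have pw' : pairwise (relk c k) (take (2 * n) s) := subseq_pairwise (take_subseq _ _) pw.
have sz : size (take (2 * n) s) = 2 * n.
  by rewrite size_take; case: ltnP => // h; apply/eqP; rewrite eqn_leq h hs.
exists k, (take (2 * n) s); split => //; split.
  rewrite sorted_pairwise; last exact: ltn_trans.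
  move/(pairwiseP 0): pw' => H.
  apply/(pairwiseP 0) => i j hi hj ij.
  by have /andP[] := H i j hi hj ij.
split.
  by apply/allP => x /mem_take hx; exact: (allP hN).
move=> p q pq hq _.
rewrite -sz in hq.
have hp : p < size (take (2 * n) s) by apply: ltn_trans hq.
move/(pairwiseP 0): pw' => H.
by have /andP[_ /eqP] := H p q hp hq pq.
Qed.

Lemma pathpair_ladder n N c k P Q :
  size P = n -> size Q = n -> sorted (relk c k) P -> sorted (relk c k) Q ->
  all (fun x => x < N) P -> all (fun x => x < N) Q ->
  (forall x y, x \in P -> y \in Q -> (x < y) /\ c x y = k) ->
  Ladder n N c.
Proof.
move=> sP sQ oP oQ nP nQ cr.
exists k, (P ++ Q); split; first by rewrite size_cat sP sQ; lia.
split.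
  rewrite sorted_pairwise; last exact: ltn_trans.
  rewrite pairwise_cat; apply/and3P; split.
  - by apply/allrelP => x y hx hy; case: (cr x y hx hy).
  - rewrite -sorted_pairwise; last exact: ltn_trans.
    by apply: sub_sorted oP => x y /andP[].
  - rewrite -sorted_pairwise; last exact: ltn_trans.
    by apply: sub_sorted oQ => x y /andP[].
split; first by rewrite all_cat nP nQ.
move=> p q pq hq hpq.
rewrite !nth_cat sP.
case: (ltnP q n) => hqn.
- have -> : p < n by lia.
  have eq : q = p.+1 by move: hpq => /orP[/eqP //|/eqP]; lia.
  subst q.
  move/(sortedP 0): oP => H.
  have hp : p.+1 < size P by rewrite sP.
  by have /andP[_ /eqP] := H p hp.
case: (ltnP p n) => hpn.
- apply: (cr _ _ (mem_nth _ _) (mem_nth _ _)).2; rewrite ?sP ?sQ //; lia.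
- have eq : q = p.+1 by move: hpq => /orP[/eqP //|/eqP]; lia.
  subst q.
  have -> : p.+1 - n = (p - n).+1 by lia.
  move/(sortedP 0): oQ => H.
  have hp : (p - n).+1 < size Q by rewrite sQ; lia.
  by have /andP[_ /eqP] := H (p - n) hp.
Qed.

Fixpoint ends (c : nat -> nat -> bool) (k : bool) (X : seq nat) (p : nat) (v : nat) : bool :=
  if p is p'.+1 then has (fun u => relk c k u v && ends c k X p' u) X else true.

Lemma sorted_rcons2 (e : rel nat) t u v :
  sorted e (rcons (rcons t u) v) = sorted e (rcons t u) && e u v.
Proof.
case: t => [|x t] /=; first by rewrite andbT.
by rewrite rcons_path last_rcons.
Qed.

Lemma ends_path c k X p v : ends c k X p v ->
  exists s, size s = p /\ all (fun x => x \in X) s /\ sorted (relk c k) (rcons s v).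
Proof.
elim: p v => [|p IH] v /=; first by move=> _; exists [::].
move=> /hasP[u uX /andP[ruv /IH[s [sz [sX ss]]]]].
exists (rcons s u); split; first by rewrite size_rcons sz.
split; first by rewrite all_rcons uX sX.
by rewrite sorted_rcons2 ss ruv.
Qed.

Lemma path_ends c k X t v : all (fun x => x \in X) t ->
  sorted (relk c k) (rcons t v) -> ends c k X (size t) v.
Proof.
elim/last_ind: t v => [|t u IH] v //=.
rewrite all_rcons size_rcons sorted_rcons2 => /andP[uX tX] /andP[st ruv] /=.
apply/hasP; exists u => //; rewrite ruv /=; exact: IH.
Qed.

Lemma pw_neg c k E : pairwise ltn E ->
  (forall u v, u \in E -> v \in E -> u < v -> c u v != k) ->
  pairwise (relk c (~~ k)) E.
Proof.
elim: E => [|x E IH] //= /andP[hx hE] H.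
apply/andP; split.
  apply/allP => y hy.
  have hxy : x < y := allP hx y hy.
  rewrite /relk hxy /=.
  have hy' : y \in x :: E by rewrite in_cons hy orbT.
  have := H x y (mem_head _ _) hy' hxy.
  by move: (c x y) (k) => [] [].
apply: IH => // u v hu hv; apply: H; by rewrite in_cons ?hu ?hv orbT.
Qed.

Lemma ES c k q' : forall p X, sorted ltn X -> p * q' < size X ->
  (exists s, size s = p.+1 /\ all (fun x => x \in X) s /\ sorted (relk c k) s) \/
  (exists s, all (fun x => x \in X) s /\ q'.+1 <= size s /\ pairwise (relk c (~~ k)) s).
Proof.
elim=> [|p IH] X sX hX.
  left; case: X sX hX => [|x X] //= _ _.
  by exists [:: x]; rewrite /= mem_head.
set E := filter (ends c k X p) X.
set Z := filter (predC (ends c k X p)) X.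
have hsz : size E + size Z = size X by rewrite !size_filter count_predC.
have ZX : forall x, x \in Z -> x \in X by move=> x; rewrite mem_filter => /andP[].
have EX : forall x, x \in E -> x \in X by move=> x; rewrite mem_filter => /andP[].
case: (ltnP (p * q') (size Z)) => hZ.
  have sZ : sorted ltn Z by apply: sorted_filter => //; exact: ltn_trans.
  case: (IH Z sZ hZ) => [[s [sz [sZs ss]]]|[s [sZs [szs ps]]]].
    exfalso.
    move: sz sZs ss; case/lastP: s => [|t v] //.
    rewrite size_rcons all_rcons => -[sz] /andP[vZ tZ] st.
    have tX : all (fun x => x \in X) t by apply/allP => x /(allP tZ) /ZX.
    have := @path_ends c k X t v tX st; rewrite sz.
    by move: vZ; rewrite mem_filter /= => /andP[/negbTE ->].
  right; exists s; split => //.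
  by apply/allP => x /(allP sZs) /ZX.
have hE : q'.+1 <= size E by move: hX; rewrite mulSn; lia.
case: (boolP (has (fun u => has (fun v => relk c k u v) E) E)).
  move=> /hasP[u uE /hasP[v vE ruv]].
  left.
  have : ends c k X p u by move: uE; rewrite mem_filter => /andP[].
  move=> /(@ends_path c k X p u)[t [st [tX tt]]].
  exists (rcons (rcons t u) v); split; first by rewrite !size_rcons st.
  split; first by rewrite !all_rcons (EX _ uE) (EX _ vE) tX.
  by rewrite sorted_rcons2 tt ruv.
move=> /hasPn H; right; exists E; split.
  by apply/allP => x /EX.
split => //.
apply: pw_neg.
  rewrite -sorted_pairwise; last exact: ltn_trans.
  by apply: sorted_filter => //; exact: ltn_trans.
move=> u v hu hv uv.
have := H u hu; move=> /hasPn /(_ v hv).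
by rewrite /relk uv.
Qed.

Definition s0 (n : nat) : nat := (n.-1 * (2 * n).-1).+1.

Lemma lemB n N c k X Y : 0 < n -> sorted ltn X -> sorted ltn Y ->
  all (fun x => x < N) X -> all (fun x => x < N) Y ->
  s0 n <= size X -> s0 n <= size Y ->
  (forall x y, x \in X -> y \in Y -> (x < y) /\ c x y = k) ->
  Ladder n N c.
Proof.
move=> n0 sX sY nX nY hX hY cr.
have e1 : (n.-1).+1 = n by lia.
have e2 : ((2 * n).-1).+1 = 2 * n by lia.
case: (@ES c k (2 * n).-1 n.-1 X sX hX) => [[P [sP [PX oP]]]|[s [sXs [szs ps]]]]; last first.
  apply: (@clique_ladder n N c (~~ k) s ps); first by rewrite -e2.
  by apply/allP => x /(allP sXs) /(allP nX).
case: (@ES c k (2 * n).-1 n.-1 Y sY hY) => [[Q [sQ [QY oQ]]]|[s [sYs [szs ps]]]]; last first.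
  apply: (@clique_ladder n N c (~~ k) s ps); first by rewrite -e2.
  by apply/allP => x /(allP sYs) /(allP nY).
rewrite e1 in sP sQ; apply: (@pathpair_ladder n N c k P Q) => //.
- by apply/allP => x /(allP PX) /(allP nX).
- by apply/allP => x /(allP QY) /(allP nY).
- by move=> x y hx hy; apply: cr; [exact: (allP PX) | exact: (allP QY)].
Qed.

Lemma reach n N c chi (C : nat -> seq nat) : 0 < n ->
  (forall j, j < n -> sorted ltn (C j)) ->
  (forall j, j < n -> all (fun x => x < N) (C j)) ->
  (forall j, j < n -> (s0 n + s0 n).-1 <= size (C j)) ->
  (forall j, j.+1 < n -> forall u v, u \in C j -> v \in C j.+1 -> u < v) ->
  Ladder n N c \/
  exists x : nat -> nat, (forall j, j < n -> x j \in C j) /\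
                         (forall j, j.+1 < n -> c (x j) (x j.+1) = chi).
Proof.
move=> n0 sC nC szC oC.
have s0pos : 0 < s0 n by [].
have key : forall j, j < n -> Ladder n N c \/
  exists W, [/\ sorted ltn W, s0 n <= size W, all (fun w => w \in C j) W &
    forall w, w \in W -> exists x : nat -> nat, [/\ x j = w,
      (forall k, k <= j -> x k \in C k) &
      (forall k, k < j -> c (x k) (x k.+1) = chi)]].
  elim=> [|j IH] hj.
    right; exists (C 0); split.
    - exact: sC.
    - by have := szC 0 hj; lia.
    - by apply/allP => x.
    move=> w hw; exists (fun _ => w); split => // k; rewrite leqn0 => /eqP ->; exact: hw.
  case: (IH (ltnW hj)) => [L|[W [sW szW WC HW]]]; first by left.
  set a := fun v => has (fun u => c u v == chi) W.
  set W' := filter a (C j.+1).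
  set U := filter (predC a) (C j.+1).
  have hsz : size W' + size U = size (C j.+1) by rewrite !size_filter count_predC.
  have WCj : forall w, w \in W -> w \in C j by move=> w; exact: (allP WC).
  case: (leqP (s0 n) (size U)) => hU.
    left; apply: (@lemB n N c (~~ chi) W U n0 sW) => //.
    - by apply: sorted_filter; [exact: ltn_trans | exact: sC].
    - by apply/allP => x /WCj /(allP (nC j (ltnW hj))).
    - by apply/allP => x; rewrite mem_filter => /andP[_ /(allP (nC _ hj))].
    move=> x y hx; rewrite mem_filter => /andP[hay hy]; split.
      exact: (oC j hj x y (WCj x hx) hy).
    move: hay; rewrite /= /a => /hasPn /(_ x hx).
    by move: (c x y) (chi) => [] [].
  right; exists W'; split.
  - by apply: sorted_filter; [exact: ltn_trans | exact: sC].
  - by have := szC _ hj; lia.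
  - by apply/allP => v; rewrite mem_filter => /andP[].
  move=> v; rewrite mem_filter => /andP[/hasP[u hu /eqP cuv] hv].
  have [x [xj xC xc]] := HW u hu.
  exists (fun k => if k == j.+1 then v else x k); split.
  - by rewrite eqxx.
  - move=> k hk; case: eqP => [-> //|/eqP ne]; apply: xC; lia.
  - move=> k hk.
    have -> : (k == j.+1) = false by apply/eqP; lia.
    case: (eqVneq k.+1 j.+1) => [[ek]|ne].
      by subst k; rewrite xj.
    apply: xc; lia.
have hn1 : n.-1 < n by lia.
have [L|[W [sW szW WC HW]]] := key n.-1 hn1; first by left.
right.
case: W sW szW WC HW => [|w W] //= _ _ _ HW.
have [x [xj xC xc]] := HW w (mem_head _ _).
exists x; split.
- move=> j hj; apply: xC; lia.
- move=> j hj; apply: xc; lia.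
Qed.

Definition rr n := (s0 n + s0 n).-1.
Definition mm n := (rr n + rr n).-1.
Definition KK n := (2 * n).-1.
Definition Pb n i := iota (i * mm n) (mm n).
Definition Qb n i := iota (((KK n + KK n).-1 - i) * mm n) (mm n).
Definition N0 n := (KK n + KK n) * mm n.

Lemma mulstep a b m : a < b -> a * m + m <= b * m.
Proof. move=> ab; have := leq_mul ab (leqnn m); rewrite mulSn; lia. Qed.

Lemma PP n i i' u v : i < i' -> u \in Pb n i -> v \in Pb n i' -> u < v.
Proof.
rewrite /Pb !mem_iota => ii /andP[_ hu] /andP[hv _].
have := @mulstep i i' (mm n) ii; lia.
Qed.

Lemma PQ n i i' u v : i < KK n -> i' < KK n -> u \in Pb n i -> v \in Qb n i' -> u < v.
Proof.
rewrite /Pb /Qb !mem_iota => hi hi' /andP[_ hu] /andP[hv _].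
have h : i < (KK n + KK n).-1 - i' by lia.
have := @mulstep i _ (mm n) h; lia.
Qed.

Lemma QQ n i i' u v : i < i' -> i' < KK n -> u \in Qb n i' -> v \in Qb n i -> u < v.
Proof.
rewrite /Qb !mem_iota => ii hi' /andP[_ hu] /andP[hv _].
have h : (KK n + KK n).-1 - i' < (KK n + KK n).-1 - i by lia.
have := @mulstep _ _ (mm n) h; lia.
Qed.

Lemma Pbound n i u : i < KK n -> u \in Pb n i -> u < N0 n.
Proof.
rewrite /Pb /N0 mem_iota => hi /andP[_ hu].
have h : i < KK n + KK n by lia.
have := @mulstep _ _ (mm n) h; lia.
Qed.

Lemma Qbound n i u : i < KK n -> u \in Qb n i -> u < N0 n.
Proof.
rewrite /Qb /N0 mem_iota => hi /andP[_ hu].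
have h : (KK n + KK n).-1 - i < KK n + KK n by lia.
have := @mulstep _ _ (mm n) h; lia.
Qed.

Arguments PP {n i i' u v}.
Arguments PQ {n i i' u v}.
Arguments QQ {n i i' u v}.
Arguments Pbound {n i u}.
Arguments Qbound {n i u}.

Definition rich (c : nat -> nat -> bool) (chi : bool) (n i y : nat) := rr n <= count (fun x => c x y == chi) (Pb n i).
Definition kap (c : nat -> nat -> bool) (n i : nat) := rr n <= count (rich c true n i) (Qb n i).

Lemma rich_or c n i y : 0 < n -> rich c true n i y || rich c false n i y.
Proof.
move=> n0; rewrite /rich.
have h := count_predC (fun x => c x y == true) (Pb n i).
have e : count (predC (fun x => c x y == true)) (Pb n i) = count (fun x => c x y == false) (Pb n i).
  by apply: eq_count => x /=; case: (c x y).
have hs : size (Pb n i) = (rr n + rr n).-1 by rewrite /Pb size_iota.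
rewrite e hs in h.
have rpos : 0 < rr n by rewrite /rr /s0; lia.
case: leqP => //= h1; lia.
Qed.

Lemma kap_rich c n i chi : 0 < n -> kap c n i == chi -> rr n <= count (rich c chi n i) (Qb n i).
Proof.
move=> n0 /eqP <-; case E: (kap c n i); first by [].
move: E; rewrite /kap => /negbT; rewrite -ltnNge => h.
have h2 := count_predC (rich c true n i) (Qb n i).
have h3 : count (predC (rich c true n i)) (Qb n i) <= count (rich c false n i) (Qb n i).
  apply: sub_count => y /=; have := @rich_or c n i y n0; by case: (rich c true n i y).
have hs : size (Qb n i) = (rr n + rr n).-1 by rewrite /Qb size_iota.
rewrite hs in h2.
have rpos : 0 < rr n by rewrite /rr /s0; lia.
lia.
Qed.

Lemma nths n (z x : nat -> nat) p : p < 2 * n ->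
  nth 0 (mkseq z n ++ mkseq x n) p = if p < n then z p else x (p - n).
Proof.
move=> hp; rewrite nth_cat size_mkseq; case: ltnP => h.
  by rewrite nth_mkseq.
by rewrite nth_mkseq //; lia.
Qed.

Lemma final_ladder n N c chi (z x : nat -> nat) :
  0 < n ->
  (forall k, k.+1 < n -> z k < z k.+1) -> z n.-1 < x 0 ->
  (forall k, k.+1 < n -> x k < x k.+1) ->
  (forall k, k < n -> z k < N) -> (forall k, k < n -> x k < N) ->
  (forall k, k.+1 < n -> c (z k) (z k.+1) = chi) ->
  (forall k, k.+1 < n -> c (x k) (x k.+1) = chi) ->
  (forall k, k < n -> c (z k) (x (n.-1 - k)) = chi) ->
  Ladder n N c.
Proof.
move=> n0 zo zx xo zN xN zc xc rc.
exists chi, (mkseq z n ++ mkseq x n); split.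
  by rewrite size_cat !size_mkseq; lia.
split.
  apply/(sortedP 0) => i; rewrite size_cat !size_mkseq => hi.
  rewrite !nths; try lia.
  case: (ltnP i.+1 n) => h1.
    have -> : i < n by lia.
    exact: zo.
  case: (ltnP i n) => h2.
    have ei : i = n.-1 by lia.
    subst i; have -> : n.-1.+1 - n = 0 by lia.
    exact: zx.
  have -> : i.+1 - n = (i - n).+1 by lia.
  apply: xo; lia.
split.
  apply/allP => y; rewrite mem_cat => /orP[] /mapP[k]; rewrite mem_iota => /andP[_ hk] ->.
    exact: zN.
  exact: xN.
move=> p q pq hq hpq.
rewrite !nths; try lia.
case: (ltnP q n) => hqn.
  have -> : p < n by lia.
  have eq : q = p.+1 by move: hpq => /orP[/eqP //|/eqP]; lia.
  subst q; apply: zc; lia.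
case: (ltnP p n) => hpn.
  have -> : q - n = n.-1 - p by move: hpq => /orP[/eqP|/eqP]; lia.
  exact: rc.
have eq : q = p.+1 by move: hpq => /orP[/eqP //|/eqP]; lia.
subst q.
have -> : p.+1 - n = (p - n).+1 by lia.
apply: xc; lia.
Qed.

Lemma main_nat n N c : 0 < n -> N0 n <= N -> Ladder n N c.
Proof.
move=> n0 hN.
set I0 := iota 0 (KK n).
set chi := n <= count (kap c n) I0.
set I := filter (fun i => kap c n i == chi) I0.
have szI : n <= size I.
  rewrite /I size_filter.
  have h := count_predC (kap c n) I0.
  have hs : size I0 = (2 * n).-1 by rewrite /I0 size_iota.
  rewrite hs in h.
  case E: chi.
    by rewrite (eq_count (a2 := kap c n)) ?E // => i; rewrite eqb_id.
  rewrite (eq_count (a2 := predC (kap c n))); last by move=> i; rewrite eqbF_neg.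
  move: E; rewrite /chi => /negbT; rewrite -ltnNge => hlt; lia.
have sI : sorted ltn I.
  by apply: sorted_filter; [exact: ltn_trans | exact: iota_ltn_sorted].
set idx := fun k => nth 0 I k.
have idxI : forall k, k < n -> idx k \in I.
  move=> k hk; rewrite /idx; apply: mem_nth; exact: leq_trans hk szI.
have idxK : forall k, k < n -> idx k < KK n.
  by move=> k /idxI; rewrite mem_filter mem_iota => /andP[_ /andP[_]].
have idxc : forall k, k < n -> kap c n (idx k) == chi.
  by move=> k /idxI; rewrite mem_filter => /andP[].
have idxm : forall k k', k < k' -> k' < n -> idx k < idx k'.
  move=> k k' kk hk'.
  have H := sorted_ltn_nth ltn_trans 0 sI.
  apply: H => //; rewrite inE; apply: leq_trans szI; lia.
set C := fun j => filter (rich c chi n (idx (n.-1 - j))) (Qb n (idx (n.-1 - j))).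
have R1 : forall j, j < n -> sorted ltn (C j).
  by move=> j hj; apply: sorted_filter; [exact: ltn_trans | exact: iota_ltn_sorted].
have R2 : forall j, j < n -> all (fun x => x < N) (C j).
  move=> j hj; apply/allP => y; rewrite mem_filter => /andP[_ hy].
  have hi : n.-1 - j < n by lia.
  have := Qbound (idxK _ hi) hy; lia.
have R3 : forall j, j < n -> (s0 n + s0 n).-1 <= size (C j).
  move=> j hj; rewrite size_filter -/(rr n); apply: kap_rich => //; apply: idxc; lia.
have R4 : forall j, j.+1 < n -> forall u v, u \in C j -> v \in C j.+1 -> u < v.
  move=> j hj u v; rewrite !mem_filter => /andP[_ hu] /andP[_ hv].
  have h1 : n.-1 - j.+1 < n.-1 - j by lia.
  have h2 : n.-1 - j < n by lia.
  exact: (QQ (idxm _ _ h1 h2) (idxK _ h2) hu hv).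
have [L|[x [xC xc]]] := @reach n N c chi C n0 R1 R2 R3 R4; first by [].
set D := fun k => filter (fun w => c w (x (n.-1 - k)) == chi) (Pb n (idx k)).
have S1 : forall j, j < n -> sorted ltn (D j).
  by move=> j hj; apply: sorted_filter; [exact: ltn_trans | exact: iota_ltn_sorted].
have S2 : forall j, j < n -> all (fun x => x < N) (D j).
  move=> j hj; apply/allP => y; rewrite mem_filter => /andP[_ hy].
  have := Pbound (idxK _ hj) hy; lia.
have S3 : forall j, j < n -> (s0 n + s0 n).-1 <= size (D j).
  move=> k hk; rewrite size_filter.
  have hi : n.-1 - k < n by lia.
  have := xC (n.-1 - k) hi; rewrite mem_filter => /andP[hr _].
  by move: hr; rewrite /rich; have -> : n.-1 - (n.-1 - k) = k by lia.
have S4 : forall j, j.+1 < n -> forall u v, u \in D j -> v \in D j.+1 -> u < v.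
  move=> j hj u v; rewrite !mem_filter => /andP[_ hu] /andP[_ hv].
  exact: (PP (idxm _ _ (ltnSn j) hj) hu hv).
have [L|[z [zD zc]]] := @reach n N c chi D n0 S1 S2 S3 S4; first by [].
have xQ : forall j, j < n -> x j \in Qb n (idx (n.-1 - j)).
  by move=> j hj; have := xC j hj; rewrite mem_filter => /andP[].
have zP : forall k, k < n -> z k \in Pb n (idx k).
  by move=> k hk; have := zD k hk; rewrite mem_filter => /andP[].
apply: (@final_ladder n N c chi z x n0).
- move=> k hk; exact: (PP (idxm _ _ (ltnSn k) hk) (zP _ (ltnW hk)) (zP _ hk)).
- have h1 : n.-1 < n by lia.
  have h2 : n.-1 - 0 < n by lia.
  exact: (PQ (idxK _ h1) (idxK _ h2) (zP _ h1) (xQ _ n0)).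
- move=> k hk; have h1 : k < n by lia.
  have hm : n.-1 - k.+1 < n.-1 - k by lia.
  have h2 : n.-1 - k < n by lia.
  exact: (QQ (idxm _ _ hm h2) (idxK _ h2) (xQ _ h1) (xQ _ hk)).
- move=> k hk; have := Pbound (idxK _ hk) (zP _ hk); lia.
- move=> k hk; have h2 : n.-1 - k < n by lia.
  have := Qbound (idxK _ h2) (xQ _ hk); lia.
- exact: zc.
- exact: xc.
- move=> k hk; have := zD k hk; rewrite mem_filter => /andP[/eqP -> _] //.
Qed.

Lemma adj_cases n (p q : 'I_(2 * n)) : p < q -> ladder_adj n p q ->
  (q == p.+1 :> nat) || (p + q == (2 * n).-1).
Proof.
move=> pq; rewrite /ladder_adj.
case/orP => [/andP[/eqP <- _]|]; first by rewrite eqxx.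
case/orP => [/andP[/eqP e _]|]; first lia.
case/orP => [/andP[/eqP <- _]|]; first by rewrite eqxx.
case/orP => [/andP[/eqP e _]|]; first lia.
by move=> ->; rewrite orbT.
Qed.

Lemma N0_bound n : 0 < n -> N0 n <= 32 * n ^ 3.
Proof.
case: n => [//|n] _.
rewrite /N0 /KK /mm /rr /s0.
have -> : (2 * n.+1).-1 = 2 * n + 1 by lia.
have -> : (n.+1).-1 = n by [].
have -> : ((n * (2 * n + 1)).+1 + (n * (2 * n + 1)).+1).-1 = 2 * (n * (2 * n + 1)) + 1 by lia.
have -> : ((2 * (n * (2 * n + 1)) + 1) + (2 * (n * (2 * n + 1)) + 1)).-1 = 4 * (n * (2 * n + 1)) + 1 by lia.
rewrite !expnS expn0; nia.
Qed.

Theorem mainTheorem4 (n : nat) (hn : 1 <= n) :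
  @ordered_ramsey_le (2 * n) (@ladder_adj n) (2 * n) (@ladder_adj n) (32 * n ^ 3).
Proof.
exists (32 * n ^ 3) => // c.
have hN : 0 < 32 * n ^ 3 by rewrite muln_gt0 expn_gt0 hn.
pose x0 : 'I_(32 * n ^ 3) := Ordinal hN.
pose cn := fun a b => c (insubd x0 a) (insubd x0 b).
have [k [s [sz [so [sN col]]]]] := @main_nat n (32 * n ^ 3) cn hn (@N0_bound n hn).
pose f : 'I_(2 * n) -> 'I_(32 * n ^ 3) := fun p => insubd x0 (nth 0 s p).
have fv : forall p : 'I_(2 * n), val (f p) = nth 0 s p.
  move=> p; rewrite /f val_insubd.
  have hp : p < size s by rewrite sz.
  by rewrite (allP sN _ (mem_nth 0 hp)).
have hc : @has_mono_copy (2 * n) (@ladder_adj n) (32 * n ^ 3) c k.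
  exists f; split.
    move=> x y xy.
    have fv' : forall p : 'I_(2 * n), nat_of_ord (f p) = nth 0 s p := fv.
    rewrite !fv'.
    have H := sorted_ltn_nth ltn_trans 0 so.
    by apply: H => //; rewrite inE sz.
  move=> x y xy adj.
  exact: (col x y xy (ltn_ord y) (@adj_cases n x y xy adj)).
by move: (k) hc => [] hc; [right | left].
Qed.
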